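(* Let $\mathcal{A}=\mathcal{R}*_K\mathcal{S}*_L\mathcal{T}\in\mathbb{C}^{I_1\times\cdots\times I_N\times J_1\times\cdots\times J_M}$, where $\mathcal{R}\in\mathbb{C}^{I_1\times\cdots\times I_N\times H_1\times\cdots\times H_K}$, $\mathcal{S}\in\mathbb{C}^{H_1\times\cdots\times H_K\times G_1\times\cdots\times G_L}$ and $\mathcal{T}\in\mathbb{C}^{G_1\times\cdots\times G_L\times J_1\times\cdots\times J_M}$, and put $\mathcal{B}=\mathcal{T}^{\dagger}*_L(\mathcal{A}*_M\mathcal{T}^{\dagger})^{\dagger}$ and $\mathcal{C}=(\mathcal{R}^{\dagger}*_N\mathcal{A})^{\dagger}*_K\mathcal{R}^{\dagger}$. (i) The product Moore–Penrose inverse of $\mathcal{A}$ relative to the factorization $\mathcal{A}=\mathcal{A}*_M(\mathcal{A}^{\dagger}*_N\mathcal{A}*_M\mathcal{T}^{\dagger})*_L\mathcal{T}$ (i.e. with $\mathcal{A}$, $\mathcal{A}^{\dagger}*_N\mathcal{A}*_M\mathcal{T}^{\dagger}$, $\mathcal{T}$ in the roles of the three factors) equals $\mathcal{B}$. (ii) The product Moore–Penrose inverse of $\mathcal{A}$ relative to the factorization $\mathcal{A}=\mathcal{R}*_K(\mathcal{R}^{\dagger}*_N\mathcal{A}*_M\mathcal{A}^{\dagger})*_N\mathcal{A}$ (i.e. with $\mathcal{R}$, $\mathcal{R}^{\dagger}*_N\mathcal{A}*_M\mathcal{A}^{\dagger}$, $\mathcal{A}$ in the roles of the three factors) equals $\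mathcal{C}$.
   Context: $\mathbb{C}^{I_1\times\cdots\times I_N}$ denotes the set of complex tensors of order $N$ and dimension $I_1\times\cdots\times I_N$. For $\mathcal{A}\in\mathbb{C}^{I_1\times\cdots\times I_N\times K_1\times\cdots\times K_N}$ and $\mathcal{B}\in\mathbb{C}^{K_1\times\cdots\times K_N\times J_1\times\cdots\times J_M}$, the Einstein product $\mathcal{A}*_N\mathcal{B}$ is defined by $(\mathcal{A}*_N\mathcal{B})_{i_1\dots i_N j_1\dots j_M}=\sum_{k_1,\dots,k_N}a_{i_1\dots i_N k_1\dots k_N}b_{k_1\dots k_N j_1\dots j_M}$; it is associative. $\mathcal{A}^H$ denotes the conjugate transpose. For $\mathcal{A}\in\mathbb{C}^{I_1\times\cdots\times I_N\times J_1\times\cdots\times J_M}$ the Moore–Penrose inverse $\mathcal{A}^{\dagger}$ is the unique $\mathcal{X}\in\mathbb{C}^{J_1\times\cdots\times J_M\times I_1\times\cdots\times I_N}$ with $\mathcal{A}*_M\mathcal{X}*_N\mathcal{A}=\mathcal{A}$, $\mathcal{X}*_N\mathcal{A}*_M\mathcal{X}=\mathcal{X}$, $(\mathcal{A}*_M\mathcal{X})^H=\mathcal{A}*_M\mathcal{X}$, $(\mathcal{X}*_N\mathcal{A})^H=\mathcal{X}*_N\mathcal{A}$. Given a factorization $\mathcal{A}=\mathcal{P}*_{k}\mathcal{Q}*_{l}\mathcal{U}$ with $\mathcal{P}$ having last $k$ modes equal to the first $k$ modes of $\mathcal{Q}$, $\mathcal{Q}$ having last $l$ modes equal to the first $l$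 modes of $\mathcal{U}$, $\mathcal{P}$ sharing its first $N$ modes with $\mathcal{A}$ and $\mathcal{U}$ sharing its last $M$ modes with $\mathcal{A}$, the product Moore–Penrose inverse of $\mathcal{A}$ relative to this factorization is $\mathcal{U}^{\dagger}*_{l}(\mathcal{P}^{\dagger}*_N\mathcal{A}*_M\mathcal{U}^{\dagger})^{\dagger}*_{k}\mathcal{P}^{\dagger}$. *)

(* Defs.v *)
From HB Require Import structures.
From mathcomp Require Import all_boot all_order all_algebra.
From Stdlib Require Import ClassicalEpsilon.
Set Implicit Arguments. Unset Strict Implicit. Unset Printing Implicit Defensive.
Import Order.TTheory GRing.Theory Num.Theory.
Local Open Scope ring_scope.

Definition idx (d : seq nat) := {dffun forall k : 'I_(size d), 'I_(nth 0%N d k)}.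

Section Tensors.
Variable C : numClosedFieldType.

(* A tensor in C^{I_1 x ... x I_N x J_1 x ... x J_M}, with the modes split as
   (first N modes, shape I) and (last M modes, shape J). *)
Definition tensor (I J : seq nat) := idx I -> idx J -> C.

Definition einstein (I K J : seq nat) (A : tensor I K) (B : tensor K J)
  : tensor I J := fun i j => \sum_(k : idx K) A i k * B k j.

Definition ctrans (I J : seq nat) (A : tensor I J) : tensor J I :=
  fun j i => (A i j)^*.

Definition is_MP (I J : seq nat) (A : tensor I J) (X : tensor J I) : Prop :=
  [/\ einstein (einstein A X) A = A,
      einstein (einstein X A) X = X,
      ctrans (einstein A X) = einstein A X &
      ctrans (einstein X A) = einstein X A].

(* The Moore-Penrose inverse: the (unique, existing) X satisfying the Penrose
   equations, selected by classical choice. *)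
Definition MPinv (I J : seq nat) (A : tensor I J) : tensor J I :=
  epsilon (inhabits (fun _ _ => 0)) (is_MP A).

Definition prodMP (I K L J : seq nat)
  (P : tensor I K) (Q : tensor K L) (U : tensor L J) (A : tensor I J)
  : tensor J I :=
  einstein (einstein (MPinv U)
                     (MPinv (einstein (einstein (MPinv P) A) (MPinv U))))
           (MPinv P).
End Tensors.

(* Main.v *)
Require Import Defs.
From mathcomp Require Import all_boot all_order all_algebra.
From Stdlib Require Import FunctionalExtensionality ClassicalEpsilon.
Set Implicit Arguments. Unset Strict Implicit. Unset Printing Implicit Defensive.
Import GRing.Theory Num.Theory.
Local Open Scope ring_scope.

Section Mx.
Variable C : numClosedFieldType.

Definition mxH m n (A : 'M[C]_(m, n)) : 'M[C]_(n, m) := \matrix_(i, j) (A j i)^*.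

Lemma mxH_mul m n p (A : 'M[C]_(m, n)) (B : 'M_(n, p)) :
  mxH (A *m B) = mxH B *m mxH A.
Proof.
apply/matrixP=> i j; rewrite !mxE rmorph_sum; apply: eq_bigr => k _.
by rewrite !mxE rmorphM mulrC.
Qed.

Lemma mxHK m n (A : 'M[C]_(m, n)) : mxH (mxH A) = A.
Proof. by apply/matrixP=> i j; rewrite !mxE conjCK. Qed.

Lemma mxHB m n (A B : 'M[C]_(m, n)) : mxH (A - B) = mxH A - mxH B.
Proof. by apply/matrixP=> i j; rewrite !mxE rmorphB. Qed.

Lemma mxH_eq0 m n (B : 'M[C]_(m, n)) : mxH B *m B = 0 -> B = 0.
Proof.
move=> h; apply/matrixP=> i j; rewrite mxE.
have := congr1 (fun M : 'M[C]_n => M j j) h; rewrite !mxE => /eqP.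
rewrite psumr_eq0; last by move=> k _; rewrite mxE mulrC mul_conjC_ge0.
move/allP=> /(_ i (mem_index_enum _)) /=.
by rewrite mxE mulrC mul_conjC_eq0 => /eqP.
Qed.

Lemma K1 m n p (A : 'M[C]_(m, n)) (U V : 'M_(n, p)) :
  mxH A *m A *m U = mxH A *m A *m V -> A *m U = A *m V.
Proof.
move=> h; apply/eqP; rewrite -subr_eq0; apply/eqP/mxH_eq0.
have h0 : mxH A *m (A *m (U - V)) = 0.
  by rewrite mulmxA mulmxBr h subrr.
by rewrite -mulmxBr mxH_mul -mulmxA h0 mulmx0.
Qed.

Lemma projA m n (A : 'M[C]_(m, n)) F :
  mxH A *m A *m F *m (mxH A *m A) = mxH A *m A ->
  A *m F *m mxH A *m A = A.
Proof.
move=> h.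
have := @K1 _ _ _ A (F *m mxH A *m A) 1%:M.
rewrite !mulmx1 !mulmxA; apply.
by move: h; rewrite !mulmxA.
Qed.

Lemma projH m n (A : 'M[C]_(m, n)) F :
  mxH A *m A *m F *m (mxH A *m A) = mxH A *m A ->
  mxH (A *m F *m mxH A) = A *m F *m mxH A.
Proof.
move=> h.
have h' : mxH A *m A *m mxH F *m (mxH A *m A) = mxH A *m A.
  by have := congr1 (@mxH _ _) h; rewrite !mxH_mul !mxHK !mulmxA.
have e1 := projA h; have e2 := projA h'.
have e4 : mxH A *m mxH (A *m F *m mxH A) = mxH A.
  by rewrite -mxH_mul e1.
have e5 : (A *m F *m mxH A) *m mxH (A *m F *m mxH A) = A *m F *m mxH A.
  by rewrite -mulmxA e4.
by rewrite -{1}e5 mxH_mul mxHK e5.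
Qed.

Definition mpm m n (A : 'M[C]_(m, n)) (X : 'M[C]_(n, m)) :=
  [/\ A *m X *m A = A, X *m A *m X = X,
      mxH (A *m X) = A *m X & mxH (X *m A) = X *m A].

Lemma mp_exists m n (A : 'M[C]_(m, n)) : exists X, mpm A X.
Proof.
have [F hF] : exists F, mxH A *m A *m F *m (mxH A *m A) = mxH A *m A.
  by eexists; exact: (mulmxKpV (submx_refl _)).
have [G hG] : exists G, mxH (mxH A) *m mxH A *m G *m (mxH (mxH A) *m mxH A)
          = mxH (mxH A) *m mxH A.
  by rewrite mxHK; eexists; exact: (mulmxKpV (submx_refl _)).
have PA := projA hF; have PH := projH hF.
have QA := projA hG; have QH := projH hG.
rewrite mxHK in QA QH.
have AQ : A *m mxH A *m G *m A = A.
  by have := congr1 (@mxH _ _) QA; rewrite mxH_mul !mxHK QH !mulmxA.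
exists (mxH A *m G *m A *m F *m mxH A).
have AX : A *m (mxH A *m G *m A *m F *m mxH A) = A *m F *m mxH A.
  by rewrite !mulmxA AQ.
have XA : (mxH A *m G *m A *m F *m mxH A) *m A = mxH A *m G *m A.
  have PA' : A *m (F *m (mxH A *m A)) = A by rewrite !mulmxA.
  by rewrite -!mulmxA PA'.
split.
- by rewrite AX.
- by rewrite XA !mulmxA QA.
- by rewrite AX.
- by rewrite XA.
Qed.

Lemma mp_uniq m n (A : 'M[C]_(m, n)) X Y : mpm A X -> mpm A Y -> X = Y.
Proof.
case=> X1 X2 X3 X4 [Y1 Y2 Y3 Y4].
have X1' : A *m (X *m A) = A by rewrite mulmxA X1.
have Y2' : Y *m (A *m Y) = Y by rewrite mulmxA Y2.
have eX : X = X *m A *m Y.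
  transitivity (X *m mxH (A *m X) *m mxH (A *m Y)).
    by rewrite -mulmxA -mxH_mul !mulmxA Y1 X3 mulmxA X2.
  by rewrite X3 Y3 !mulmxA X2.
have eY : Y = X *m A *m Y.
  transitivity (mxH (X *m A) *m mxH (Y *m A) *m Y).
    by rewrite -mxH_mul -!mulmxA X1' Y4 -mulmxA Y2'.
  by rewrite X4 Y4 -!mulmxA Y2' mulmxA.
by rewrite eY -eX.
Qed.

Lemma mpR m n (A : 'M[C]_(m, n)) X : mpm A X ->
  [/\ A *m (X *m A) = A, X *m (A *m X) = X,
      forall p (Z : 'M_(n, p)), A *m (X *m (A *m Z)) = A *m Z &
      forall p (Z : 'M_(m, p)), X *m (A *m (X *m Z)) = X *m Z].
Proof.
case=> h1 h2 _ _; split; first by rewrite mulmxA h1.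
- by rewrite mulmxA h2.
- by move=> p Z; rewrite !mulmxA h1.
- by move=> p Z; rewrite !mulmxA h2.
Qed.

Lemma projeq1 n (P Q : 'M[C]_n) : mxH P = P -> mxH Q = Q ->
  Q *m P = P -> P *m Q = Q -> P = Q.
Proof. by move=> hP hQ e1 e2; rewrite -hP -e1 mxH_mul hP hQ e2. Qed.

Lemma projeq2 n (P Q : 'M[C]_n) : mxH P = P -> mxH Q = Q ->
  P *m Q = P -> Q *m P = Q -> P = Q.
Proof. by move=> hP hQ e1 e2; rewrite -hP -e1 mxH_mul hP hQ e2. Qed.

Lemma part1 p q g (a' : 'M[C]_(p, g)) (t : 'M_(g, q)) ti ai w v :
  mpm t ti -> mpm (a' *m t) ai -> mpm (ai *m (a' *m t) *m ti) w ->
  mpm (a' *m t *m ti) v ->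
  ti *m w *m ai = ti *m v.
Proof.
move=> ht ha hw hv.
have [a ea] : {a | a' *m t = a} by exists (a' *m t).
rewrite ea in ha hw hv.
have [Y eY] : {Y | ai *m a *m ti = Y} by exists (ai *m a *m ti).
rewrite eY in hw.
suff -> : v = w *m ai by rewrite mulmxA.
apply: (mp_uniq hv).
have [A1 A2 A1R A2R] := mpR ha; have [W1 W2 W1R W2R] := mpR hw.
have [A1l A2l _ A4] := ha; have [_ _ W3 _] := hw.
have [T1 _ _ _] := mpR ht.
have f1 : a *m ti = a *m Y by rewrite -eY !mulmxA A1l.
have f2R : forall r (Z : 'M_(g, r)), ai *m (a *m (Y *m Z)) = Y *m Z.
  by move=> r Z; rewrite -eY !mulmxA A2l.
have f4 : ai *m a = Y *m t by rewrite -eY -!mulmxA -ea -!mulmxA T1.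
have f3 : Y *m w = ai *m a.
  apply: projeq1 => //.
  - by rewrite -mulmxA f2R.
  - by rewrite f4 -mulmxA W1R.
have f3R : forall r (Z : 'M_(q, r)), Y *m (w *m Z) = ai *m (a *m Z).
  by move=> r Z; rewrite !mulmxA f3.
split; rewrite f1 -!mulmxA.
- by rewrite f3R !A1R.
- by rewrite f2R W2R.
- by rewrite f3R A1R; case: ha.
- have f2 : ai *m (a *m Y) = Y by rewrite -eY !mulmxA A2l.
  by rewrite f2; case: hw.
Qed.

Lemma part2 p q h g (r : 'M[C]_(p, h)) (s : 'M_(h, g)) (t : 'M_(g, q)) ri ai w v :
  mpm r ri -> mpm (r *m s *m t) ai -> mpm (ri *m (r *m s *m t) *m ai) w ->
  mpm (ri *m (r *m s *m t)) v ->
  ai *m w *m ri = v *m ri.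
Proof.
move=> hr ha hw hv.
have [a ea] : {a | r *m s *m t = a} by exists (r *m s *m t).
rewrite ea in ha hw hv.
have [Y eY] : {Y | ri *m a *m ai = Y} by exists (ri *m a *m ai).
rewrite eY in hw.
suff -> : v = ai *m w by [].
apply: (mp_uniq hv).
have [A1 A2 A1R A2R] := mpR ha; have [W1 W2 W1R W2R] := mpR hw.
have [_ _ A3 A4] := ha; have [_ _ W3 W4] := hw.
have [_ _ R1R _] := mpR hr.
have f1 : ri *m a = Y *m a by rewrite -eY -!mulmxA A1.
have f2R : forall k (Z : 'M_(p, k)), Y *m (a *m (ai *m Z)) = Y *m Z.
  by move=> k Z; rewrite -eY -!mulmxA A1R.
have f2 : Y *m (a *m ai) = Y by rewrite -eY -!mulmxA A1R.
have f4 : a *m ai = r *m Y by rewrite -eY -ea -!mulmxA R1R.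
have f3 : w *m Y = a *m ai.
  apply: esym; apply: projeq2 => //.
  - by rewrite f4 -!mulmxA W1.
  - by rewrite -!mulmxA f2.
have f3R : forall k (Z : 'M_(p, k)), w *m (Y *m Z) = a *m (ai *m Z).
  by move=> k Z; rewrite !mulmxA f3.
split; rewrite f1 -!mulmxA.
- by rewrite f2R W1R.
- by rewrite f2R W2.
- by rewrite f2R.
- by rewrite f3R A2R.
Qed.

End Mx.

Section Tens.
Variable C : numClosedFieldType.

Definition tm I J (A : tensor C I J) : 'M[C]_(#|idx I|, #|idx J|) :=
  \matrix_(i, j) A (enum_val i) (enum_val j).

Definition mt I J (M : 'M[C]_(#|idx I|, #|idx J|)) : tensor C I J :=
  fun i j => M (enum_rank i) (enum_rank j).

Lemma tm_inj I J (A B : tensor C I J) : tm A = tm B -> A = B.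
Proof.
move=> e; apply: functional_extensionality => i.
apply: functional_extensionality => j.
have := congr1 (fun M : 'M[C]_(#|idx I|, #|idx J|) => M (enum_rank i) (enum_rank j)) e.
by rewrite !mxE !enum_rankK.
Qed.

Lemma tmK I J (M : 'M[C]_(#|idx I|, #|idx J|)) : tm (mt M) = M.
Proof. by apply/matrixP=> i j; rewrite mxE /mt !enum_valK. Qed.

Lemma tm_mul I K J (A : tensor C I K) (B : tensor C K J) :
  tm (einstein A B) = tm A *m tm B.
Proof.
apply/matrixP=> i j; rewrite !mxE /einstein.
under [RHS]eq_bigr do rewrite !mxE.
rewrite (reindex (@enum_val (idx K) (idx K))) //=.
exact: onW_bij (enum_val_bij _).
Qed.

Lemma tm_ctrans I J (A : tensor C I J) : tm (ctrans A) = mxH (tm A).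
Proof. by apply/matrixP=> i j; rewrite !mxE. Qed.

Lemma MP_tm I J (A : tensor C I J) X : is_MP A X -> mpm (tm A) (tm X).
Proof.
case=> h1 h2 h3 h4; split.
- by rewrite -!tm_mul h1.
- by rewrite -!tm_mul h2.
- by rewrite -tm_mul -tm_ctrans h3.
- by rewrite -tm_mul -tm_ctrans h4.
Qed.

Lemma MP_spec I J (A : tensor C I J) : is_MP A (MPinv A).
Proof.
rewrite /MPinv; apply: epsilon_spec.
have [X0 [h1 h2 h3 h4]] := mp_exists (tm A).
exists (mt X0); split; apply: tm_inj;
  rewrite ?tm_ctrans !tm_mul tmK //.
Qed.

End Tens.

Theorem theorem3p8 (C : numClosedFieldType) (I H G J : seq nat)
  (R : tensor C I H) (S : tensor C H G) (T : tensor C G J) :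
  let A := einstein (einstein R S) T in
  let B := einstein (MPinv T) (MPinv (einstein A (MPinv T))) in
  let Cc := einstein (MPinv (einstein (MPinv R) A)) (MPinv R) in
  prodMP A (einstein (einstein (MPinv A) A) (MPinv T)) T A = B /\
  prodMP R (einstein (einstein (MPinv R) A) (MPinv A)) A A = Cc.
Proof.
move=> A B Cc; rewrite /B /Cc /prodMP /A.
split; apply: tm_inj; rewrite !tm_mul.
- have h1 := MP_tm (MP_spec T).
  have h2 := MP_tm (MP_spec (einstein (einstein R S) T)); rewrite !tm_mul in h2.
  have h3 := MP_tm (MP_spec (einstein (einstein (MPinv (einstein (einstein R S) T)) (einstein (einstein R S) T)) (MPinv T))); rewrite !tm_mul in h3.
  have h4 := MP_tm (MP_spec (einstein (einstein (einstein R S) T) (MPinv T))); rewrite !tm_mul in h4.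
  exact: part1 h1 h2 h3 h4.
- have h1 := MP_tm (MP_spec R).
  have h2 := MP_tm (MP_spec (einstein (einstein R S) T)); rewrite !tm_mul in h2.
  have h3 := MP_tm (MP_spec (einstein (einstein (MPinv R) (einstein (einstein R S) T)) (MPinv (einstein (einstein R S) T)))); rewrite !tm_mul in h3.
  have h4 := MP_tm (MP_spec (einstein (MPinv R) (einstein (einstein R S) T))); rewrite !tm_mul in h4.
  exact: part2 h1 h2 h3 h4.
Qed.
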